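(* Let $G=(V,E,L)$ be a hypergraph with loops, $L=L^-\cup L^+$, and let $G'=(V,E,L^+)$ be obtained by removing all minus loops. Then $$\mathrm{PP}(G)=\Big\{z\in\mathbb{R}^{V\cup E\cup L}: (z_p)_{p\in V\cup E\cup L^+}\in\mathrm{PP}(G'),\ z_{ii}\le z_i,\ z_i\in[0,1]\ \forall\{i,i\}\in L^-\Big\}.$$
   Context: A hypergraph with loops is $G=(V,E,L)$: $V$ a finite node set, $E$ a set of subsets of $V$ of cardinality at least two, $L$ a set of loops $\{i,i\}$, $i\in V$, partitioned as $L=L^-\cup L^+$ (minus/plus loops). $\mathrm{PP}(G):=\mathrm{conv}\{z\in\mathbb{R}^{V\cup E\cup L}: z_{ii}\ge z_i^2\ \forall\{i,i\}\in L^+,\ z_{ii}\le z_i^2\ \forall \{i,i\}\in L^-,\ z_e=\prod_{i\in e}z_i\ \forall e\in E,\ z_i\in[0,1]\ \forall i\in V\}$. *)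

(* Defs.v *)
From HB Require Import structures.
From mathcomp Require Import all_boot all_order all_algebra.
From mathcomp Require Export reals.
Set Implicit Arguments. Unset Strict Implicit. Unset Printing Implicit Defensive.
Import Order.TTheory GRing.Theory Num.Theory.
Local Open Scope ring_scope.

(* A hypergraph with loops G = (V,E,L): V a finite node type, E a set of
   subsets of V (each of cardinality >= 2, imposed as a hypothesis), and the
   loops {i,i} in L are identified with the nodes i in a set L : {set V}.
   The coordinates of R^{V ∪ E ∪ L}: one per node, one per edge e ∈ E and
   one per loop {i,i} ∈ L. *)
Inductive hcoord (V : finType) (E : {set {set V}}) (L : {set V}) : Type :=
| CNode (i : V)
| CEdge (e : {set V}) (he : e \in E)
| CLoop (i : V) (hi : i \in L).

Arguments CNode {V E L} i.
Arguments CEdge {V E L} e he.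
Arguments CLoop {V E L} i hi.

Definition conv (R : realType) (T : Type) (S : (T -> R) -> Prop) : (T -> R) -> Prop :=
  fun z => exists (n : nat) (lam : 'I_n -> R) (p : 'I_n -> T -> R),
    [/\ (forall k, 0 <= lam k), \sum_(k < n) lam k = 1,
        (forall k, S (p k)) & (forall t, z t = \sum_(k < n) lam k * p k t)].

Lemma inLm (V : finType) (Lm Lp : {set V}) (i : V) : i \in Lm -> i \in Lm :|: Lp.
Proof. by move=> h; rewrite inE h. Qed.

Lemma inLp (V : finType) (Lm Lp : {set V}) (i : V) : i \in Lp -> i \in Lm :|: Lp.
Proof. by move=> h; rewrite inE h orbT. Qed.

Lemma inLp0 (V : finType) (Lp : {set V}) (i : V) : i \in set0 :|: Lp -> i \in Lp.
Proof. by rewrite set0U. Qed.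

Definition PPpoints (R : realType) (V : finType) (E : {set {set V}}) (Lm Lp : {set V})
  (z : hcoord E (Lm :|: Lp) -> R) : Prop :=
  [/\ (forall i (h : i \in Lp), z (CLoop i (inLp Lm h)) >= z (CNode i) ^+ 2),
      (forall i (h : i \in Lm), z (CLoop i (inLm Lp h)) <= z (CNode i) ^+ 2),
      (forall e (h : e \in E), z (CEdge e h) = \prod_(i in e) z (CNode i)) &
      (forall i, 0 <= z (CNode i) <= 1)].

Definition PP (R : realType) (V : finType) (E : {set {set V}}) (Lm Lp : {set V}) :
  (hcoord E (Lm :|: Lp) -> R) -> Prop :=
  conv (@PPpoints R V E Lm Lp).

(* Projection (z_p)_{p ∈ V ∪ E ∪ L^+} of z ∈ R^{V ∪ E ∪ L}; the coordinate
   space of G' = (V, E, L^+) is hcoord E (set0 :|: Lp) (no minus loops). *)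
Definition dropminus (R : realType) (V : finType) (E : {set {set V}}) (Lm Lp : {set V})
  (z : hcoord E (Lm :|: Lp) -> R) : hcoord E (set0 :|: Lp) -> R :=
  fun c => match c with
  | CNode i => z (CNode i)
  | CEdge e h => z (CEdge e h)
  | CLoop i h => z (CLoop i (inLp Lm (inLp0 h)))
  end.

(* Main.v *)
Require Import Defs.
From HB Require Import structures.
From mathcomp Require Import all_boot all_order all_algebra.
From mathcomp Require Import reals.
From mathcomp Require Import ring lra.
Import Order.TTheory GRing.Theory Num.Theory.
Local Open Scope ring_scope.

Lemma conv_fin (R : realType) (T : Type) (S : (T -> R) -> Prop) z (I : finType)
  (lam : I -> R) (p : I -> T -> R) :
  (forall i, 0 <= lam i) -> \sum_i lam i = 1 -> (forall i, S (p i)) ->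
  (forall t, z t = \sum_i lam i * p i t) -> conv S z.
Proof.
move=> l0 l1 Sp zE.
exists #|I|, (fun k => lam (enum_val k)), (fun k => p (enum_val k)); split => //.
- by rewrite -l1 (big_enum_val (A := I)).
- by move=> t; rewrite zE (big_enum_val (A := I)).
Qed.

Lemma prod_split (R : realType) (V : finType) (c y : V -> bool -> R) (A : {set V}) :
  \sum_(f : {ffun V -> bool}) (\prod_j c j (f j) * \prod_(j in A) y j (f j)) =
  \prod_j (c j true * (if j \in A then y j true else 1) + c j false * (if j \in A then y j false else 1)).
Proof.
under eq_bigr => j _ do rewrite -(big_bool +%R (fun b => c j b * (if j \in A then y j b else 1))).
rewrite bigA_distr_bigA /=; apply: eq_bigr => f _.
by rewrite [X in _ * X]big_mkcond -big_split.
Qed.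

Definition loopval (R : realType) (V : finType) (E : {set {set V}}) (L : {set V})
  (f : hcoord E L -> R) (i : V) : R :=
  match @idP (i \in L) with ReflectT h => f (CLoop i h) | ReflectF _ => 0 end.

Arguments loopval {R V E L}.

Lemma loopvalE (R : realType) (V : finType) (E : {set {set V}}) (L : {set V})
  (f : hcoord E L -> R) (i : V) (h : i \in L) : loopval f i = f (CLoop i h).
Proof.
rewrite /loopval; destruct (@idP (i \in L)) as [h'|h']; last by case: (h' h).
by rewrite (bool_irrelevance h' h).
Qed.

Arguments loopvalE {R V E L}.
Arguments prod_split {R V}.

Lemma keyK (R : realType) (V : finType) (Lm : {set V}) (x : V -> R) (A : {set V}) :
  \sum_(f : {ffun V -> bool})
    (\prod_j (if j \in Lm then (if f j then x j else 1 - x j) else (if f j then 0 else 1))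
     * \prod_(j in A) (if j \in Lm then (f j)%:R else x j)) = \prod_(j in A) x j.
Proof.
rewrite (prod_split (fun j b => if j \in Lm then (if b then x j else 1 - x j) else (if b then 0 else 1))
   (fun j b => if j \in Lm then (b%:R) else x j)).
rewrite [RHS]big_mkcond; apply: eq_bigr => j _ /=.
by case: (j \in Lm); case: (j \in A) => /=; ring.
Qed.

Arguments keyK {R V}.

Theorem lemma4 (R : realType) (V : finType) (E : {set {set V}}) (Lm Lp : {set V})
  (hE : forall e, e \in E -> (1 < #|e|)%N)
  (hdisj : [disjoint Lm & Lp])
  (z : hcoord E (Lm :|: Lp) -> R) :
  PP z <->
  (PP (dropminus z) /\
   (forall i (h : i \in Lm),
       z (CLoop i (inLm Lp h)) <= z (CNode i) /\ 0 <= z (CNode i) <= 1)).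
Proof.
split.
  move=> [n [lam [p [l0 l1 Sp zE]]]]; split.
    exists n, lam, (fun k => dropminus (p k)); split => //.
      move=> k; case: (Sp k) => Hp Hm He Hn; split.
      - move=> i h /=.
        by rewrite (bool_irrelevance (inLp Lm (inLp0 (inLp set0 h))) (inLp Lm h)); exact: Hp.
      - by move=> i h; exfalso; move: h; rewrite inE.
      - by move=> e h /=; exact: He.
      - by move=> i /=; exact: Hn.
    by case=> [i|e h|i h] /=; rewrite zE.
  move=> i h; rewrite !zE; split.
    apply: ler_sum => k _; apply: ler_wpM2l => //.
    case: (Sp k) => _ Hm _ Hn; apply: (le_trans (Hm i h)).
    have /andP[a b] := Hn i; rewrite expr2; exact: ler_piMr.
  apply/andP; split.
    apply: sumr_ge0 => k _; have /andP[a b] := (let: And4 _ _ _ Hn := Sp k in Hn i).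
    exact: mulr_ge0.
  rewrite -l1; apply: ler_sum => k _.
  have /andP[a b] := (let: And4 _ _ _ Hn := Sp k in Hn i).
  exact: ler_piMr.
move=> [[n [lam [p [l0 l1 Sp zE]]]] Hm].
pose x k i := p k (CNode i).
pose w k i := loopval (p k) i.
pose d i := z (CNode i) - loopval z i.
pose c k j (b : bool) := if j \in Lm then (if b then x k j else 1 - x k j) else (if b then 0 else 1).
pose y k j (b : bool) := if j \in Lm then (b%:R) else x k j.
pose q k (f : {ffun V -> bool}) (t : hcoord E (Lm :|: Lp)) :=
  match t with
  | CNode i => y k i (f i)
  | CEdge e _ => \prod_(j in e) y k j (f j)
  | CLoop i _ => if i \in Lm then y k i (f i) - d i else w k i
  end.
have K k (A : {set V}) : \sum_(f : {ffun V -> bool}) (\prod_j c k j (f j) * \prod_(j in A) y k j (f j))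
     = \prod_(j in A) x k j .
  exact: (keyK Lm (x k) A).
have K0 k : \sum_(f : {ffun V -> bool}) \prod_j c k j (f j) = 1.
  transitivity (\prod_(j in (set0 : {set V})) x k j); last by rewrite big_set0.
  by rewrite -K; apply: eq_bigr => f _; rewrite big_set0 mulr1.
have xin k i : 0 <= x k i <= 1 by case: (Sp k) => _ _ _ Hn; exact: Hn.
apply: (@conv_fin R _ _ z ('I_n * {ffun V -> bool})%type
   (fun kf => lam kf.1 * \prod_j c kf.1 j (kf.2 j)) (fun kf => q kf.1 kf.2)).
- move=> [k f] /=; apply: mulr_ge0 => //; apply: prodr_ge0 => j _.
  have /andP[a b] := xin k j; rewrite /c; case: (j \in Lm); case: (f j) => //; lra.
- rewrite -(pair_bigA _ (fun k (f : {ffun V -> bool}) => lam k * \prod_j c k j (f j))) /=; rewrite -[RHS]l1.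
  by apply: eq_bigr => k _; rewrite -mulr_sumr K0 mulr1.
- move=> [k f] /=; split.
  + move=> i h /=; rewrite (disjointFl hdisj h).
    have hi : i \in set0 :|: Lp by rewrite set0U.
    rewrite /w (loopvalE _ _ hi) /y (disjointFl hdisj h).
    case: (Sp k) => Hp _ _ _; have := Hp i h.
    by rewrite /x (bool_irrelevance (inLp set0 h) hi).
  + move=> i h /=; rewrite h /y h.
    have [hz _] := Hm i h.
    have hd : 0 <= d i by rewrite /d (loopvalE _ _ (inLm Lp h)) subr_ge0.
    by case: (f i) => /=; lra.
  + by move=> e h.
  + move=> i /=; rewrite /y; case: (i \in Lm); last exact: xin.
    by case: (f i); rewrite ?ler01 ?lexx.
- move=> t; rewrite -(pair_bigA _ (fun k (f : {ffun V -> bool}) => lam k * \prod_j c k j (f j) * q k f t)) /=.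
  under eq_bigr => k _ do under eq_bigr => f _ do rewrite -mulrA.
  under eq_bigr => k _ do rewrite -mulr_sumr.
  case: t => [i|e h|i h] /=.
  + have -> : z (CNode i) = dropminus z (CNode i) by [].
    rewrite zE; apply: eq_bigr => k _; congr (_ * _).
    under eq_bigr => f _ do rewrite -(big_set1 (@GRing.mul R) i (fun j => y k j (f j))).
    by rewrite K big_set1.
  + have -> : z (CEdge e h) = dropminus z (CEdge e h) by [].
    rewrite zE; apply: eq_bigr => k _; congr (_ * _).
    rewrite K; case: (Sp k) => _ _ He _; rewrite He //.
  + case hm: (i \in Lm).
      have Kk k : \sum_(f : {ffun V -> bool}) \prod_j c k j (f j) * (y k i (f i) - d i) = x k i - d i.
        under eq_bigr => f _ do rewrite mulrBr.
        rewrite sumrB -big_distrl /= K0 mul1r; congr (_ - _).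
        under eq_bigr => f _ do rewrite -(big_set1 (@GRing.mul R) i (fun j => y k j (f j))).
        by rewrite K big_set1.
      under eq_bigr => k _ do rewrite Kk.
      under eq_bigr => k _ do rewrite mulrBr.
      rewrite sumrB -big_distrl /= l1 mul1r.
      have -> : \sum_(k < n) lam k * x k i = z (CNode i).
        by have := zE (CNode i) => /= ->.
      by rewrite /d (loopvalE _ _ h); lra.
    have hi : i \in set0 :|: Lp.
      by move: h; rewrite !inE hm.
    have -> : z (CLoop i h) = dropminus z (CLoop i hi).
      by rewrite /= (bool_irrelevance (inLp Lm (inLp0 hi)) h).
    rewrite zE; apply: eq_bigr => k _; congr (_ * _).
    by rewrite -big_distrl /= K0 mul1r /w (loopvalE _ _ hi).
Qed.
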